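(* Let $D$ be a square-free integer, $p$ an odd prime, $k,\ell$ positive integers and $c_D$ a positive integer with $\gcd(c_D k, p) = 1$. Let $N = c_D k p^{\ell} - 1$ be an odd prime with $\left(\frac{D}{N}\right) = -1$, and let $w \in \mathcal{G}_N(D)$. Then one of the following holds: (i) $w^{c_D k} \equiv 1 \pmod{N}$; (ii) there exists an integer $j$ with $0 \le j < \ell$ such that $\Phi_p\bigl(w^{c_D k p^j}\bigr) \equiv 0 \pmod{N}$, where $\Phi_p$ is the $p$-th cyclotomic polynomial.
   Context: For an integer $n \ge 2$ and a square-free integer $D$: if $D \equiv 2,3 \pmod 4$, let $\mathcal{I}_n(D) = \{a + b\sqrt{D} : a,b \in \mathbb{Z}/n\mathbb{Z}\}$ (the ring $\mathbb{Z}[\sqrt D]/n\mathbb{Z}[\sqrt D]$) and $\mathcal{G}_n(D) = \{a + b\sqrt{D} \in \mathcal{I}_n(D) : a^2 - Db^2 \equiv 1 \pmod n\}$; if $D \equiv 1 \pmod 4$, let $\omega = \frac{1+\sqrt D}{2}$, $\mathcal{I}_n(D) = \{a + b\omega : a,b \in \mathbb{Z}/n\mathbb{Z}\}$ (the ring $\mathbb{Z}[\omega]/n\mathbb{Z}[\omega]$) and $\mathcal{G}_n(D) = \{a + b\omega \in \mathcal{I}_n(D) : a^2 + ab + \frac{1-D}{4} b^2 \equiv 1 \pmod n\}$. Powers are computed in $\mathcal{I}_n(D)$, a congruence $x \equiv y \pmod n$ for $x,y \in \mathcal{I}_n(D)$ means equality in $\mathcal{I}_n(D)$, and polynomials are evaluated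 in $\mathcal{I}_n(D)$. *)

(* Defs.v *)
From HB Require Import structures.
From mathcomp Require Import all_boot all_order all_algebra all_field.
Set Implicit Arguments. Unset Strict Implicit. Unset Printing Implicit Defensive.
Import Order.TTheory GRing.Theory Num.Theory.
Local Open Scope ring_scope.

Definition squarefree (D : int) : Prop :=
  forall d : int, (d * d %| D)%Z -> `|d| = 1.

Definition legendre (D : int) (N : nat) : int :=
  if (N%:Z %| D)%Z then 0
  else if [exists x : 'I_N, (N%:Z %| (x%:Z) ^+ 2 - D)%Z] then 1 else -1.

(* Elements a + b*sqrt D (D = 2,3 mod 4) or a + b*omega (D = 1 mod 4)
   of I_n(D), with a, b in Z/nZ (n >= 2). *)
Definition qI (n : nat) := ('Z_n * 'Z_n)%type.

Definition qone (n : nat) : qI n := (1, 0).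

Definition qmul (D : int) (n : nat) (x y : qI n) : qI n :=
  let: (a, b) := x in let: (c, d) := y in
  if (D %% 4)%Z == 1 then
    (* omega^2 = omega + (D-1)/4 *)
    (a * c + b * d * ((D - 1) %/ 4)%Z%:~R, a * d + b * c + b * d)
  else
    (a * c + D%:~R * b * d, a * d + b * c).

Definition qpow (D : int) (n : nat) (x : qI n) (m : nat) : qI n :=
  iter m (qmul D x) (qone n).

Definition qeval (D : int) (n : nat) (P : {poly int}) (x : qI n) : qI n :=
  \sum_(i < size P) (qpow D x i) *~ P`_i.

Definition inG (D : int) (n : nat) (x : qI n) : bool :=
  let: (a, b) := x in
  if (D %% 4)%Z == 1 then
    a ^+ 2 + a * b + ((1 - D) %/ 4)%Z%:~R * b ^+ 2 == 1
  else
    a ^+ 2 - D%:~R * b ^+ 2 == 1.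

(* Main.v *)
Require Import Defs.
From HB Require Import structures.
From mathcomp Require Import all_boot all_order all_algebra all_field.
From mathcomp Require Import ring.
Import Order.TTheory GRing.Theory Num.Theory.
Local Open Scope ring_scope.
Set Implicit Arguments. Unset Strict Implicit.

Section Quad.
Variable F : comNzRingType.
Lemma pairD (x y : F * F) : x + y = (x.1+y.1, x.2+y.2). Proof. by []. Qed.
Definition quad (t s : F) : Type := (F * F)%type.
Variables t s : F.
HB.instance Definition _ := GRing.Zmodule.on (quad t s).
Definition qm (x y : quad t s) : quad t s :=
  (x.1*y.1 + s*(x.2*y.2), x.1*y.2 + x.2*y.1 + t*(x.2*y.2)).
Definition qo : quad t s := (1, 0).
Lemma qmA : associative qm.
Proof. by case=> a b [c d] [e f]; rewrite /qm /=; congr pair; ring. Qed.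
Lemma qmC : commutative qm.
Proof. by case=> a b [c d]; rewrite /qm /=; congr pair; ring. Qed.
Lemma qm1 : left_id qo qm.
Proof. by case=> a b; rewrite /qm /=; congr pair; ring. Qed.
Lemma qmD : left_distributive qm +%R.
Proof. by case=> a b [c d] [e f]; rewrite /qm /= pairD /=; congr pair; ring. Qed.
Lemma qo_neq0 : qo != 0.
Proof. by apply/eqP => -[] /eqP; rewrite oner_eq0. Qed.
HB.instance Definition _ := GRing.Zmodule_isComNzRing.Build (quad t s) qmA qmC qm1 qmD qo_neq0.
Lemma quad_mulE (x y : quad t s) : x * y = qm x y. Proof. by []. Qed.
Lemma quad_addE (x y : quad t s) : x + y = (x.1 + y.1, x.2 + y.2). Proof. by []. Qed.
End Quad.
Lemma Phi_prime (p : nat) : prime p -> 'Phi_p * ('X - 1) = 'X^p - 1.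
Proof.
move=> pp; have p0 := prime_gt0 pp.
have h1 : 'Phi_1 = 'X - 1 by rewrite -(prod_Cyclotomic (ltnSn 0)) big_seq1.
rewrite -(prod_Cyclotomic p0) -h1.
have pe : perm_eq (divisors p) [:: p; 1%N].
  apply: uniq_perm; first exact: divisors_uniq.
    by rewrite /= andbT inE; apply: contraTneq pp => ->.
  move=> d; rewrite -dvdn_divisors // !inE.
  apply/idP/idP; first by case/primeP: pp => _ H /H; rewrite orbC.
  by case/orP=> /eqP ->; rewrite ?dvd1n.
by rewrite (perm_big _ pe) /= !big_cons big_nil mulr1.
Qed.
Section Euler.
Variable N : nat.
Hypothesis prN : prime N.
Hypothesis oddN : odd N.
Local Notation F := ('F_N).

Lemma N_gt2 : (2 < N)%N.
Proof. by case: N prN oddN => [|[|[|]]]. Qed.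

Lemma Fexp (x : F) : x ^+ N = x.
Proof. by rewrite -{2}(expf_card x) card_Fp. Qed.

Lemma Fnat0 n : ((n%:R : F) == 0) = (N %| n)%N.
Proof.
apply/eqP/idP => [h | h].
  by move: (congr1 (@nat_of_ord _) h); rewrite val_Fp_nat //= => /eqP.
by apply: ord_inj; rewrite val_Fp_nat //; apply/eqP.
Qed.

Lemma N_half : N = (N.-1./2).*2.+1.
Proof.
case: (N) oddN => // n /= on.
by rewrite -{1}(odd_double_half n) (negbTE on) add0n.
Qed.

Lemma euler (d : F) : (forall y : F, y ^+ 2 != d) -> d ^+ (N.-1./2) = -1.
Proof.
move=> nsq.
have d0 : d != 0 by apply: contraNneq (nsq 0) => ->; rewrite expr0n.
set m := N.-1./2.
have Nm : N = m.*2.+1.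
  rewrite /m; case: (N) oddN => // n /= on.
  by rewrite -{1}(odd_double_half n) (negbTE on) add0n.
have m0 : (0 < m)%N by move: N_gt2; rewrite Nm; case: (m).
have xN1 (x : F) : x != 0 -> x ^+ m.*2 = 1.
  move=> x0; apply: (mulfI x0); rewrite -exprS -Nm Fexp mulr1 //.
have : (d ^+ m) ^+ 2 == 1 by rewrite -exprM muln2 xN1.
rewrite sqrf_eq1 => /orP[/eqP dm1|/eqP //]; exfalso.
pose rs := d :: [seq (i.+1)%:R ^+ 2 | i <- iota 0 m] : seq F.
have nzi i : (i < m)%N -> (i.+1)%:R != 0 :> F.
  move=> im; rewrite Fnat0; apply/negP => /dvdn_leq => /(_ isT).
  by rewrite Nm ltnNge => /negP; apply; rewrite -addnn ltn_addr.
suff : (size rs < size (('X^m - 1)%R : {poly F}))%N.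
  by rewrite size_Xn_sub_1 // /= size_map size_iota ltnn.
apply: max_poly_roots.
- by rewrite -size_poly_eq0 size_Xn_sub_1.
- apply/allP => x; rewrite inE => /orP[/eqP ->|/mapP[i]].
    by rewrite /root !hornerE dm1 subrr.
  rewrite mem_iota add0n => /andP[_ im] ->.
  by rewrite /root !hornerE -exprM mulnC muln2 xN1 ?subrr ?expf_neq0 ?nzi.
- rewrite /= map_inj_in_uniq ?iota_uniq ?andbT.
    by apply/negP => /mapP[i _ e]; move: (nsq (i.+1)%:R); rewrite e eqxx.
  move=> i j; rewrite !mem_iota !add0n => /andP[_ im] /andP[_ jm] /eqP.
  rewrite eqf_sqr => /orP[/eqP e|/eqP e].
    move: (congr1 (@nat_of_ord _) e); rewrite !val_Fp_nat // !modn_small; first by case.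
      by rewrite Nm ltnS -addnn ltn_addr.
    by rewrite Nm ltnS -addnn ltn_addr.
  move/eqP: e; rewrite -subr_eq0 opprK -natrD Fnat0 => /dvdn_leq => /(_ isT).
  by rewrite Nm ltnNge => /negP; elim; rewrite -addnn leq_add.
Qed.

End Euler.

Section Core.
Variable N : nat.
Hypothesis prN : prime N.
Hypothesis oddN : odd N.
Local Notation F := ('F_N).
Variables t s : F.
Hypothesis noroot : forall x : F, x ^+ 2 != t * x + s.
Local Notation Q := (quad t s).

Definition e (a : F) : Q := (a, 0).
Definition om : Q := (0, 1).
Lemma pairB (x y : F * F) : x - y = (x.1 - y.1, x.2 - y.2). Proof. by []. Qed.
Lemma eD a b : e (a + b) = e a + e b. Proof. by rewrite /e pairD /= addr0. Qed.
Lemma pairN (x : F * F) : - x = (- x.1, - x.2). Proof. by []. Qed.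
Lemma eN a : e (- a) = - e a. Proof. by rewrite /e pairN /= oppr0. Qed.
Lemma eM a b : e (a * b) = e a * e b.
Proof. by rewrite quad_mulE /qm /e /=; congr pair; ring. Qed.
Lemma e1 : e 1 = 1. Proof. by []. Qed.
Lemma eX a n : e (a ^+ n) = e a ^+ n.
Proof. by elim: n => [|n IH]; rewrite ?expr0 // !exprS eM IH. Qed.
Lemma enat n : (n%:R : Q) = e n%:R.
Proof. by elim: n => [|n IH]; rewrite ?mulr0n // !mulrS IH eD. Qed.
Lemma decomp (a b : F) : ((a, b) : Q) = e a + e b * om.
Proof. by rewrite quad_mulE /qm /e /= pairD /=; congr pair; ring. Qed.
Lemma chQ : N \in [pchar Q].
Proof. by rewrite inE prN /= enat pchar_Fp_0. Qed.
Lemma frobD (x y : Q) : (x + y) ^+ N = x ^+ N + y ^+ N.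
Proof. exact: (pFrobenius_autD_comm chQ (mulrC x y)). Qed.
Lemma frobN (x : Q) : (- x) ^+ N = - x ^+ N.
Proof. exact: (pFrobenius_autN chQ x). Qed.
Lemma eFexp a : e a ^+ N = e a.
Proof. by rewrite -eX Fexp. Qed.

Lemma two_neq0 : (2 : F) != 0.
Proof.
rewrite (Fnat0 prN) //; apply/negP => /(@dvdn_leq _ 2 isT); rewrite leqNgt.
by rewrite (N_gt2 prN oddN).
Qed.

Lemma nsqD (y : F) : y ^+ 2 != t ^+ 2 + 4%:R * s.
Proof.
apply/negP => /eqP hy; have := noroot ((t + y) / 2); rewrite -subr_eq0.
have -> : ((t + y) / 2) ^+ 2 - (t * ((t + y) / 2) + s) = (y ^+ 2 - (t ^+ 2 + 4%:R * s)) / 4%:R.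
  by field; rewrite -[4%:R]/((2 * 2)%N%:R) natrM mulf_neq0 ?two_neq0.
by rewrite hy subrr mul0r eqxx.
Qed.

Definition dl : Q := (-t, 2).
Lemma dl_decomp : dl = 2 * om - e t.
Proof. by rewrite enat quad_mulE /qm /e /= pairB /=; congr pair; ring. Qed.
Lemma dl2 : dl ^+ 2 = e (t ^+ 2 + 4%:R * s).
Proof. by rewrite expr2 quad_mulE /qm /e /=; congr pair; ring. Qed.

Lemma omN : om ^+ N = e t - om.
Proof.
have h1 : dl ^+ N = - dl.
  rewrite [X in dl ^+ X](N_half oddN) exprS -mul2n exprM dl2 -eX euler //; last exact: nsqD.
  by rewrite eN e1 mulrN1.
have h2 : dl ^+ N = 2 * om ^+ N - e t.
  by rewrite dl_decomp frobD frobN exprMn enat !eFexp.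
rewrite h2 in h1.
have i2 : e (2^-1) * 2 = 1 by rewrite enat -eM mulVf ?two_neq0.
apply/eqP; rewrite -subr_eq0 -[X in X == 0]mul1r -i2 -mulrA.
have -> : 2 * (om ^+ N - (e t - om)) = (2 * om ^+ N - e t) + (2 * om - e t) by ring.
by rewrite h1 -dl_decomp addNr mulr0.
Qed.

Definition qconj (w : Q) : Q := (w.1 + t * w.2, - w.2).
Definition qnorm (w : Q) : F := w.1 ^+ 2 + t * w.1 * w.2 - s * w.2 ^+ 2.

Lemma frob_conj w : w ^+ N = qconj w.
Proof.
case: w => a b; rewrite decomp frobD exprMn !eFexp omN /qconj /=.
by rewrite /e /om pairB /= quad_mulE /qm /= pairD /=; congr pair; ring.
Qed.

Lemma mul_conj w : w * qconj w = e (qnorm w).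
Proof. by case: w => a b; rewrite quad_mulE /qm /qconj /qnorm /e /=; congr pair; ring. Qed.

Lemma qnorm_neq0 w : w != 0 -> qnorm w != 0.
Proof.
case: w => a b nz; case: (eqVneq b 0) => [b0|b0].
  subst b; rewrite /qnorm /= expr0n /= mulr0 mulr0 subr0 addr0 expf_neq0 //.
  by apply: contraNneq nz => ->.
apply/negP => /eqP h; have := noroot (- a / b); rewrite -subr_eq0.
have -> : (- a / b) ^+ 2 - (t * (- a / b) + s) = qnorm (a, b) / b ^+ 2.
  by rewrite /qnorm /=; field.
by rewrite h mul0r eqxx.
Qed.

Lemma regular (v z : Q) : v != 0 -> v * z = 0 -> z = 0.
Proof.
move=> nz h; have h2 : e (qnorm v) * z = 0 by rewrite -mul_conj mulrAC h mul0r.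
by rewrite -[z]mul1r -e1 -(mulVf (qnorm_neq0 nz)) eM -mulrA h2 mulr0.
Qed.

Lemma core (w : Q) (M0 p l : nat) : prime p -> N.+1 = (M0 * p ^ l)%N -> qnorm w = 1 ->
  w ^+ M0 = 1 \/ exists j, (j < l)%N /\ (map_poly (intr : int -> Q) 'Phi_p).[w ^+ (M0 * p ^ j)] = 0.
Proof.
move=> pp hN n1.
have wN1 : w ^+ N.+1 = 1 by rewrite exprS frob_conj mul_conj n1.
set u := w ^+ M0.
have up : u ^+ (p ^ l) = 1 by rewrite -exprM -hN.
case: (eqVneq u 1) => [-> |u1]; [by left | right].
have [j [jl [vj1 vj]]] : exists j, (j < l)%N /\ u ^+ (p ^ j) != 1 /\ u ^+ (p ^ j.+1) = 1.
  move: up; clear hN; elim: l => [|n IH] h.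
    by move: h; rewrite expn0 expr1 => h; rewrite h eqxx in u1.
  case: (eqVneq (u ^+ (p ^ n)) 1) => [h'|h'].
    have [j [jn rest]] := IH h'; exists j; split => //; by rewrite ltnS ltnW.
  by exists n.
exists j; split => //; rewrite exprM -/u.
set v := u ^+ (p ^ j).
have : (v - 1) * (map_poly (intr : int -> Q) 'Phi_p).[v] = 0.
  have := congr1 (fun P => (map_poly (intr : int -> Q) P).[v]) (Phi_prime pp).
  rewrite /= rmorphM !rmorphB /= !rmorph1 map_polyX map_polyXn.
  rewrite hornerM !hornerE mulrC => ->.
  by rewrite /v -exprM -expnSr vj subrr.
by move/regular => -> //; rewrite subr_eq0.
Qed.
End Core.

Lemma Fint0 N (prN : prime N) (z : int) : ((z%:~R : 'F_N) == 0) = (N%:Z %| z)%Z.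
Proof.
rewrite dvdzE; case: z => n /=; first by rewrite Fnat0.
by rewrite NegzE rmorphN /= oppr_eq0 Fnat0.
Qed.

Lemma leg_nsq (D : int) N (prN : prime N) : legendre D N = -1 ->
  forall y : 'F_N, y ^+ 2 != D%:~R.
Proof.
rewrite /legendre; case: ifP => // _; case: ifP => // /negbT nex _ y.
apply/negP => /eqP hy; apply: (negP nex); apply/existsP.
have yN : (y < N)%N by rewrite -[X in (_ < X)%N](Fp_cast prN) ltn_ord.
exists (Ordinal yN) => /=.
by rewrite -Fint0 // rmorphB rmorphXn /= -[(nat_of_ord y)%:~R]/((nat_of_ord y)%:R) natr_Zp hy subrr eqxx.
Qed.

Lemma bridge (D : int) (N M0 p l : nat) (t s : 'F_N) (w : qI (pdiv N)) :
  prime N -> odd N -> prime p -> N.+1 = (M0 * p ^ l)%N ->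
  (forall x : 'F_N, x ^+ 2 != t * x + s) ->
  (forall x y : qI (pdiv N), qmul D x y = (x : quad t s) * y) ->
  qnorm (w : quad t s) = 1 ->
  qpow D w M0 = qone _ \/
  exists j : nat, (j < l)%N /\ qeval D 'Phi_p (qpow D w (M0 * p ^ j)) = 0.
Proof.
move=> prN oddN pp hN nr hm hn.
have hp (x : qI (pdiv N)) n : qpow D x n = (x : quad t s) ^+ n.
  elim: n => [|n IH] //; by rewrite /qpow iterS -/(qpow D x n) IH hm exprS.
have he (P : {poly int}) (x : qI (pdiv N)) :
    qeval D P x = (map_poly (intr : int -> quad t s) P).[x : quad t s].
  rewrite (@horner_coef_wide _ (size P)); last exact: size_poly.
  rewrite /qeval; apply: eq_bigr => i _.
  by rewrite coef_map /= hp mulrzl.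
case: (core prN oddN nr pp hN hn) => [h|[j [jl h]]]; [left|right].
  by rewrite hp h.
by exists j; split => //; rewrite he hp.
Qed.

Lemma main_gen (D : int) (N M0 p l : nat) (w : qI N) :
  prime N -> odd N -> prime p -> N.+1 = (M0 * p ^ l)%N ->
  legendre D N = -1 -> inG D w ->
  qpow D w M0 = qone _ \/
  exists j : nat, (j < l)%N /\ qeval D 'Phi_p (qpow D w (M0 * p ^ j)) = 0.
Proof.
move=> prN oddN pp hN leg.
have nsq := leg_nsq prN leg.
have H : forall w : qI (pdiv N), inG D w -> qpow D w M0 = qone _ \/
  exists j : nat, (j < l)%N /\ qeval D 'Phi_p (qpow D w (M0 * p ^ j)) = 0.
  move=> {}w hw.
  case h4: ((D %% 4)%Z == 1).
  - set q := (D %/ 4)%Z.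
    have hD : D = q * 4 + 1 by rewrite {1}(divz_eq D 4) (eqP h4).
    have e1 : ((D - 1) %/ 4)%Z = q.
      have -> : D - 1 = q * 4 by rewrite {1}hD; ring.
      by rewrite mulzK.
    have e2 : ((1 - D) %/ 4)%Z = - q.
      have -> : 1 - D = (- q) * 4 by rewrite {1}hD; ring.
      by rewrite mulzK.
    clearbody q; apply: (@bridge D N M0 p l 1 (q%:~R)) => //.
    + move=> x; apply/negP => /eqP hx; apply: (negP (nsq (2 * x - 1))); apply/eqP.
      have -> : (2 * x - 1) ^+ 2 = 4%:R * (x ^+ 2) - 4%:R * x + 1 by ring.
      rewrite hx hD; ring.
    + by move=> [a b] [c d]; rewrite /qmul h4 quad_mulE /qm /= e1; congr pair; ring.
    + case: w hw => a b; rewrite /inG h4 /qnorm e2 /= => /eqP h; apply: (etrans _ h); rewrite rmorphN /=; ring.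
  - apply: (@bridge D N M0 p l 0 (D%:~R)) => //.
    + by move=> x; rewrite mul0r add0r; exact: nsq x.
    + by move=> [a b] [c d]; rewrite /qmul h4 quad_mulE /qm /=; congr pair; ring.
    + case: w hw => a b; rewrite /inG h4 /qnorm /= => /eqP h; apply: (etrans _ h); ring.
by rewrite (pdiv_id prN) in H; exact: H.
Qed.

Unset Implicit Arguments.

Theorem theorem1p3 (D : int) (p k l cD : nat)
  (w : qI (cD * k * p ^ l).-1) :
  squarefree D -> prime p -> odd p -> (0 < k)%N -> (0 < l)%N -> (0 < cD)%N ->
  coprime (cD * k) p ->
  prime (cD * k * p ^ l).-1 -> odd (cD * k * p ^ l).-1 ->
  legendre D (cD * k * p ^ l).-1 = -1 ->
  inG D w ->
  qpow D w (cD * k) = qone _ \/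
  exists j : nat, (j < l)%N /\ qeval D 'Phi_p (qpow D w (cD * k * p ^ j)) = 0.
Proof.
move=> _ pp _ k0 _ c0 _ prN oddN leg hw.
apply: main_gen => //.
rewrite prednK // !muln_gt0 c0 k0 expn_gt0 prime_gt0 //.
Qed.
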